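(* Let $\mathcal{H}\subseteq\{-1,+1\}^{\mathbb{R}^d}$, $\sigma>0$, $\varepsilon>0$, and let $(x_1,y_1),\dots,(x_T,y_T)\in\mathbb{R}^d\times\{-1,+1\}$. Define $\mathsf{OPT}^{\sigma,\varepsilon}_{\mathrm{gauss}}=\min_{h\in\mathcal{H}}\sum_{t=1}^T\mathbb{1}\!\left[y_t\,\mathbb{E}_{z\sim\mathcal{N}(0,I_d)}[h(x_t+\sigma z)]\le\varepsilon\right]$ and $\ddot{\mathsf{OPT}}^{\sigma}_{\mathrm{gauss}}=\min_{h\in\mathcal{H}}\sum_{t=1}^T\Pr_{z\sim\mathcal{N}(0,I_d)}[h(x_t+\sigma z)\neq y_t]$. Then $$\mathsf{OPT}^{\sigma,\varepsilon}_{\mathrm{gauss}}\le 2\cdot\ddot{\mathsf{OPT}}^{\sigma}_{\mathrm{gauss}}+T\varepsilon.$$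
   Context: Functions in $\mathcal{H}$ are assumed measurable so that the expectations and probabilities are defined, and the minima are assumed to be attained (or read as infima). *)

(* Defs.v *)
From HB Require Import structures.
From mathcomp Require Import all_boot all_order all_algebra.
From mathcomp Require Import all_classical all_reals all_analysis.
Set Implicit Arguments. Unset Strict Implicit. Unset Printing Implicit Defensive.
Import Order.TTheory GRing.Theory Num.Theory.
Local Open Scope classical_set_scope.
Local Open Scope ring_scope.

(* R^d is represented by d.-tuple R, with the library's product sigma-algebra
   (generated by the coordinate projections). *)

Definition shift {R : realType} {d : nat} (x : d.-tuple R) (s : R)
  (z : d.-tuple R) : d.-tuple R :=
  [tuple tnth x i + s * tnth z i | i < d].

(* P is the law of z ~ N(0, I_d): the coordinates are independent standard
   normals, i.e. P is the product of d copies of N(0,1) (this determines P on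
   the product sigma-algebra). *)
Definition std_gaussian {R : realType} {d : nat}
  (P : probability (d.-tuple R) R) : Prop :=
  forall B : 'I_d -> set R, (forall i, measurable (B i)) ->
    P [set z | forall i, B i (tnth z i)] = (\prod_(i < d) normal_prob 0 1 (B i))%E.

Definition OPT_gauss {R : realType} {d T : nat}
  (P : probability (d.-tuple R) R) (H : set (d.-tuple R -> R))
  (sigma eps : R) (xs : 'I_T -> d.-tuple R) (ys : 'I_T -> R) : \bar R :=
  ereal_inf [set (\sum_(t < T)
      (if ((ys t)%:E * \int[P]_z (h (shift (xs t) sigma z))%:E <= eps%:E)%E
       then 1 else 0)%:E)%E | h in H].

Definition OPTdd_gauss {R : realType} {d T : nat}
  (P : probability (d.-tuple R) R) (H : set (d.-tuple R -> R))
  (sigma : R) (xs : 'I_T -> d.-tuple R) (ys : 'I_T -> R) : \bar R :=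
  ereal_inf [set (\sum_(t < T)
      P [set z | h (shift (xs t) sigma z) != ys t])%E | h in H].

(* Main.v *)
Require Import Defs.
From HB Require Import structures.
From mathcomp Require Import all_boot all_order all_algebra.
From mathcomp Require Import all_classical all_reals all_analysis.
From mathcomp Require Import ring lra.
Import Order.TTheory GRing.Theory Num.Theory.
Local Open Scope classical_set_scope.
Local Open Scope ring_scope.


Lemma per_t (R : realType) (d : nat) (P : probability (d.-tuple R) R)
  (g : d.-tuple R -> R) (mg : measurable_fun setT g)
  (hg : forall z, g z = 1 \/ g z = -1) (y : R) (hy : y = 1 \/ y = -1)
  (eps : R) (heps : 0 < eps) :
  ((if (y%:E * \int[P]_z (g z)%:E <= eps%:E)%E then 1 else 0)%:E
     <= 2%:E * P [set z | g z != y] + eps%:E)%E.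
Proof.
set A := [set z | g z != y].
have mA : measurable A.
  have := mg measurableT _ (measurableC (measurable_set1 y)).
  by rewrite setTI; congr measurable; apply/seteqP; split => z /=; move/eqP.
have gE : forall z, g z = y - (2 * y) * \1_A z.
  move=> z; rewrite indicE; case: (boolP (z \in A)) => zA /=.
    move: zA; rewrite inE /A /= => /eqP ne.
    case: (hg z) ne => ->; case: hy => -> // _; lra.
  move: zA; rewrite notin_setE /A /= => /negP; rewrite negbK => /eqP ->; lra.
set p := fine (P A).
have PA : P A = p%:E by rewrite /p fineK // fin_num_measure.
have p0 : 0 <= p by rewrite /p fine_ge0.
have intE : (\int[P]_z (g z)%:E = (y - 2 * y * p)%:E)%E.
  under eq_integral do rewrite gE EFinB.
  rewrite integralB_EFin //; last 2 first.
  - exact: finite_measure_integrable_cst.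
  - have -> : (EFin \o (fun x => 2 * y * \1_A x)) = (fun x => (2 * y)%:E * (\1_A x)%:E)%E.
      by apply: funext => x /=; rewrite EFinM.
    by apply: integrableZl => //; apply: integrable_indic.
  rewrite integral_cst //.
  under eq_integral do rewrite EFinM.
  rewrite integralZl //; last exact: integrable_indic.
  rewrite integral_indic // setIT.
  set t := (X in (_ * X - _)%E).
  have -> : t = 1%E by apply: probability_setT.
  set u := (X in (_ - _ * X)%E).
  have -> : u = p%:E by rewrite -PA.
  by rewrite mule1 -EFinM -EFinB.
rewrite intE -EFinM.
set u := (X in (_ <= _ * X + _)%E).
have -> : u = p%:E by rewrite -PA.
rewrite -EFinM -EFinD lee_fin.
have yy : y * y = 1 by case: hy => ->; lra.
have -> : y * (y - 2 * y * p) = 1 - 2 * p.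
  by case: hy => ->; ring.
case: ifP; rewrite lee_fin => H; lra.
Qed.

Lemma shift_meas (R : realType) (d : nat) (x : d.-tuple R) (s : R) :
  measurable_fun setT (Defs.shift x s).
Proof.
apply/measurable_fun_tnthP => i.
rewrite (_ : _ \o _ = fun z : d.-tuple R => tnth x i + s * tnth z i); last first.
  by apply: funext => z /=; rewrite /Defs.shift tnth_mktuple.
apply: measurable_realfun.measurable_funD; first exact: measurable_cst.
apply: measurable_realfun.measurable_funM; first exact: measurable_cst.
exact: measurable_tnth.
Qed.

Lemma per_h (R : realType) (d T : nat) (P : probability (d.-tuple R) R)
  (h : d.-tuple R -> R) (mh : measurable_fun setT h)
  (hh : forall x, h x = 1 \/ h x = -1)
  (sigma eps : R) (heps : 0 < eps)
  (xs : 'I_T -> d.-tuple R) (ys : 'I_T -> R)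
  (hys : forall t, ys t = 1 \/ ys t = -1) :
  (\sum_(t < T)
      (if ((ys t)%:E * \int[P]_z (h (Defs.shift (xs t) sigma z))%:E <= eps%:E)%E
       then 1 else 0)%:E <=
   2%:E * (\sum_(t < T) P [set z | h (Defs.shift (xs t) sigma z) != ys t]) + (T%:R * eps)%:E)%E.
Proof.
rewrite ge0_sume_distrr; last by move=> t _; exact: measure_ge0.
have -> : (T%:R * eps)%:E = (\sum_(t < T) eps%:E)%E.
  by rewrite sumEFin sumr_const card_ord mulr_natl.
rewrite -big_split /=.
apply: lee_sum => t _.
apply: (@per_t _ _ _ (fun z => h (Defs.shift (xs t) sigma z))) => //.
exact: (measurableT_comp mh (shift_meas _ _ (xs t) sigma)).
Qed.

Lemma inf_step (R : realType) (I : Type) (H : set I) (a b : I -> \bar R) (c : R) :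
  (forall h, H h -> (0 <= b h)%E) -> (forall h, H h -> (a h <= 2%:E * b h + c%:E)%E) ->
  (ereal_inf [set a h | h in H] <= 2%:E * ereal_inf [set b h | h in H] + c%:E)%E.
Proof.
move=> b0 ab.
set m := ereal_inf [set b h | h in H].
have m0 : (0 <= m)%E by apply/ereal_infP => _ [h Hh <-]; exact: b0.
have [mfin|mnfin] := boolP (m \is a fin_num); last first.
  have -> : m = +oo%E.
    by move: mnfin m0; case: (m) => //.
  by rewrite mulry gtr0_sg // mul1e addye // leey.
apply/lee_addgt0Pr => e e0.
have e20 : 0 < e / 2 by lra.
have [_ [h Hh <-] bh] := lb_ereal_inf_adherent e20 mfin.
rewrite -/m in bh.
apply: le_trans (ereal_inf_lbound (ex_intro2 _ _ h Hh erefl)) _.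
apply: le_trans (ab h Hh) _.
have bhfin : b h \is a fin_num.
  by rewrite ge0_fin_numE ?b0 //; apply: (lt_trans bh); rewrite -(fineK mfin) -EFinD ltry.
have mE := fineK mfin; have bE := fineK bhfin.
move: bh; rewrite -mE -bE -EFinD lte_fin => bh.
rewrite -!EFinM -!EFinD lee_fin.
lra.
Qed.
Theorem claim22 (R : realType) (d T : nat)
  (H : set (d.-tuple R -> R))
  (HH : forall h, H h -> measurable_fun setT h /\ (forall x, h x = 1 \/ h x = -1))
  (sigma eps : R) (hsigma : 0 < sigma) (heps : 0 < eps)
  (xs : 'I_T -> d.-tuple R) (ys : 'I_T -> R)
  (hys : forall t, ys t = 1 \/ ys t = -1)
  (P : probability (d.-tuple R) R) (hP : std_gaussian P) :
  (OPT_gauss P H sigma eps xs ys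
     <= 2%:E * OPTdd_gauss P H sigma xs ys + (T%:R * eps)%:E)%E.
Proof.
rewrite /OPT_gauss /OPTdd_gauss.
apply: inf_step.
- by move=> h _; apply: sume_ge0 => t _; exact: measure_ge0.
- move=> h Hh; have [mh hh] := HH h Hh.
  exact: per_h.
Qed.
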